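(* Consider a 1D convolutional layer mapping input sequences $w^{i-1}=(w^{i-1}_0,\dots,w^{i-1}_{N-1})$, $w^{i-1}_k\in\mathbb{R}^{c_{i-1}}$, to output sequences $w^i=(w^i_0,\dots,w^i_{N-1})$, $w^i_k\in\mathbb{R}^{c_i}$, via $$w^i_k=\phi_i\Big(b_i+\sum_{j=0}^{\ell_i-1}K^i_jw^{i-1}_{k-j}\Big),\qquad k=0,\dots,N-1,$$ with $w^{i-1}_m:=0$ for $m<0$, where $K^i_j\in\mathbb{R}^{c_i\times c_{i-1}}$, $b_i\in\mathbb{R}^{c_i}$, and $\phi_i(\nu)=(\varphi(\nu_1),\dots,\varphi(\nu_{c_i}))^\top$ with $\varphi:\mathbb{R}\to\mathbb{R}$ slope-restricted on $[0,1]$. Let $n_{x_i}=(\ell_i-1)c_{i-1}$ and let $$A_i=\begin{bmatrix}0&I\\0&0\end{bmatrix},\quad B_i=\begin{bmatrix}0\\ I\end{bmatrix},\quad C_i=\begin{bmatrix}K^i_{\ell_i-1}&\cdots&K^i_1\end{bmatrix},\quad D_i=K^i_0,$$ where $A_i\in\mathbb{R}^{n_{x_i}\times n_{x_i}}$ (the identity block of size $(\ell_i-2)c_{i-1}$) and $B_i\in\mathbb{R}^{n_{x_i}\times c_{i-1}}$ (identity block of size $c_{i-1}$), or let $(A_i,B_i,C_i,D_i)$ be replaced by $(EA_iE^{-1},EB_i,C_iE^{-1},D_i)$ for some invertible $E$. Let $\widetilde Q_i\in\mathbb{S}^{c_i}$, $\widetilde S_i\in\mathbb{R}^{c_i\times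 c_{i-1}}$, $\widetilde R_i\in\mathbb{S}^{c_{i-1}}$. If there exist a positive definite $P_i\in\mathbb{S}^{n_{x_i}}$ and a positive definite diagonal $\Lambda_i\in\mathbb{R}^{c_i\times c_i}$ such that $$\begin{bmatrix}P_i-A_i^\top P_iA_i & -A_i^\top P_iB_i & -C_i^\top\Lambda_i\\ -B_i^\top P_iA_i & \widetilde R_i-B_i^\top P_iB_i & \widetilde S_i^\top-D_i^\top\Lambda_i\\ -\Lambda_iC_i & \widetilde S_i-\Lambda_iD_i & 2\Lambda_i+\widetilde Q_i\end{bmatrix}\succeq 0,$$ then the layer is incrementally $(\widetilde Q_i,\widetilde S_i,\widetilde R_i)$-dissipative, i.e., for every $N\in\mathbb{N}_+$ and all input sequences $w^{i-1}_a,w^{i-1}_b$ of length $N$ with corresponding outputs $w^i_a,w^i_b$, writing $\Delta^i_{k}=w^i_{a,k}-w^i_{b,k}$ and $\Delta^{i-1}_{k}=w^{i-1}_{a,k}-w^{i-1}_{b,k}$, $$\sum_{k=0}^{N-1}\Big({\Delta^i_k}^\top\widetilde Q_i\Delta^i_k+2{\Delta^i_k}^\top\widetilde S_i\Delta^{i-1}_k+{\Delta^{i-1}_k}^\top\widetilde R_i\Delta^{i-1}_k\Big)\ge 0.$$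
   Context: $\mathbb{S}^n$ denotes the real symmetric $n\times n$ matrices. A function $\varphi:\mathbb{R}\to\mathbb{R}$ is slope-restricted on $[0,1]$ if $0\le\frac{\varphi(s)-\varphi(t)}{s-t}\le 1$ for all $s\ne t$. *)

(* Defs.v *)
From mathcomp Require Import all_boot all_order all_algebra.
Set Implicit Arguments. Unset Strict Implicit. Unset Printing Implicit Defensive.
Import Order.TTheory GRing.Theory Num.Theory.
Local Open Scope ring_scope.

Definition slope_restricted01 (R : realFieldType) (phi : R -> R) : Prop :=
  forall s t : R, s != t -> 0 <= (phi s - phi t) / (s - t) <= 1.

Definition psdmx (R : realFieldType) (n : nat) (M : 'M[R]_n) : Prop :=
  M^T = M /\ forall v : 'cV[R]_n, 0 <= (v^T *m M *m v) 0 0.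
Definition posdefmx (R : realFieldType) (n : nat) (M : 'M[R]_n) : Prop :=
  M^T = M /\ forall v : 'cV[R]_n, v != 0 -> 0 < (v^T *m M *m v) 0 0.

(* Convolutional layer with kernel length l.+1 (ell_i = l+1), c_{i-1} = m input
   channels, c_i = p output channels, kernels K j : 'M_(p,m), j = 0..l.
   w^i_k = phi(b + sum_{j=0}^{l} K_j w^{i-1}_{k-j}),  w^{i-1}_{k-j} := 0 if k < j. *)
Definition conv_layer (R : realFieldType) (m p l : nat) (phi : R -> R)
    (K : 'I_l.+1 -> 'M[R]_(p, m)) (b : 'cV[R]_p) (w : nat -> 'cV[R]_m) (k : nat)
    : 'cV[R]_p :=
  map_mx phi (b + \sum_(j < l.+1) (if (j <= k)%N then K j *m w (k - j)%N else 0)).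

(* State-space matrices, n_x = (ell-1) c_{i-1} = l * m.
   A = [0 I; 0 0] (shift by one block of size m), B = [0; I],
   C = [K_l ... K_1] (column s lies in block s %/ m, entry s %% m), D = K_0. *)
Definition convA (R : realFieldType) (m l : nat) : 'M[R]_(l * m) :=
  \matrix_(r, s) ((s : nat) == (r + m)%N)%:R.
Definition convB (R : realFieldType) (m l : nat) : 'M[R]_(l * m, m) :=
  \matrix_(r, s) ((r : nat) == ((l.-1) * m + s)%N)%:R.
Definition convC (R : realFieldType) (m p l : nat) (K : 'I_l.+1 -> 'M[R]_(p, m))
    : 'M[R]_(p, l * m) :=
  \matrix_(r, s) \sum_(c < m | (s %% m)%N == (c : nat)) K (inord (l - (s %/ m))%N) r c.
Definition convD (R : realFieldType) (m p l : nat) (K : 'I_l.+1 -> 'M[R]_(p, m))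
    : 'M[R]_(p, m) := K ord0.

Definition lmi_mx (R : realFieldType) (n m p : nat)
    (A : 'M[R]_n) (B : 'M[R]_(n, m)) (C : 'M[R]_(p, n)) (D : 'M[R]_(p, m))
    (P : 'M[R]_n) (Lam : 'M[R]_p)
    (Q : 'M[R]_p) (S : 'M[R]_(p, m)) (Rm : 'M[R]_m) : 'M[R]_(n + m + p) :=
  block_mx
    (block_mx (P - A^T *m P *m A) (- (A^T *m P *m B))
              (- (B^T *m P *m A)) (Rm - B^T *m P *m B))
    (col_mx (- (C^T *m Lam)) (S^T - D^T *m Lam))
    (row_mx (- (Lam *m C)) (S - Lam *m D))
    (2%:R *: Lam + Q).

Definition incr_dissipative (R : realFieldType) (m p : nat)
    (layer : (nat -> 'cV[R]_m) -> nat -> 'cV[R]_p)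
    (Q : 'M[R]_p) (S : 'M[R]_(p, m)) (Rm : 'M[R]_m) : Prop :=
  forall (N : nat), (0 < N)%N -> forall wa wb : nat -> 'cV[R]_m,
    0 <= \sum_(k < N)
      (let dy := layer wa k - layer wb k in
       let du := wa k - wb k in
       (dy^T *m Q *m dy) 0 0 + 2%:R * (dy^T *m S *m du) 0 0
         + (du^T *m Rm *m du) 0 0).

(* Main.v *)
Require Import Defs.
From mathcomp Require Import all_boot all_order all_algebra.
From mathcomp Require Import ring lra zify.
Import Order.TTheory GRing.Theory Num.Theory.
Set Implicit Arguments. Unset Strict Implicit. Unset Printing Implicit Defensive.
Local Open Scope ring_scope.

Lemma trq (R : realFieldType) n k (a : 'cV[R]_n) (M : 'M[R]_(n,k)) (b : 'cV[R]_k) :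
  (a^T *m M *m b) 0 0 = (b^T *m M^T *m a) 0 0.
Proof.
transitivity (((a^T *m M *m b)^T) 0 0); first by rewrite [in RHS]mxE.
by rewrite !trmx_mul trmxK mulmxA.
Qed.

Lemma e00D (R : realFieldType) (a b : 'M[R]_1) : (a + b) 0 0 = a 0 0 + b 0 0.
Proof. by rewrite mxE. Qed.
Lemma e00N (R : realFieldType) (a : 'M[R]_1) : (- a) 0 0 = - a 0 0.
Proof. by rewrite mxE. Qed.
Lemma e00B (R : realFieldType) (a b : 'M[R]_1) : (a - b) 0 0 = a 0 0 - b 0 0.
Proof. by rewrite !mxE. Qed.
Lemma e00Z (R : realFieldType) c (a : 'M[R]_1) : (c *: a) 0 0 = c * a 0 0.
Proof. by rewrite mxE. Qed.

Lemma quad_expand (R : realFieldType) n m p (A : 'M[R]_n) (B : 'M[R]_(n, m))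
  (C : 'M[R]_(p, n)) (D : 'M[R]_(p, m)) P Lam Q S Rm (x : 'cV[R]_n) (u : 'cV[R]_m) (y : 'cV[R]_p) :
  Lam^T = Lam ->
  ((col_mx (col_mx x u) y)^T *m lmi_mx A B C D P Lam Q S Rm *m col_mx (col_mx x u) y) 0 0 =
  (x^T *m P *m x) 0 0 - ((A *m x + B *m u)^T *m P *m (A *m x + B *m u)) 0 0
  + ((y^T *m Q *m y) 0 0 + 2%:R * (y^T *m S *m u) 0 0 + (u^T *m Rm *m u) 0 0)
  - 2%:R * (y^T *m Lam *m (C *m x + D *m u - y)) 0 0.
Proof.
move=> hL.
rewrite /lmi_mx !tr_col_mx.
rewrite !(mul_row_block, mul_row_col, mul_mx_row, mul_row_col, mulmxDl).
rewrite !linearD /= !trmx_mul.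
rewrite !(mulmxDl, mulmxDr, mulmxBl, mulmxBr, mulNmx, mulmxN, mulmxA, scalemxAl, scalemxAr).
rewrite !(e00D, e00N, e00B, e00Z).
have h1 : (x^T *m C^T *m Lam *m y) 0 0 = (y^T *m Lam *m C *m x) 0 0.
  by rewrite -(mulmxA x^T) trq !trmx_mul trmxK hL mulmxA.
have h2 : (u^T *m S^T *m y) 0 0 = (y^T *m S *m u) 0 0.
  by rewrite trq trmxK.
have h3 : (u^T *m D^T *m Lam *m y) 0 0 = (y^T *m Lam *m D *m u) 0 0.
  by rewrite -(mulmxA u^T) trq !trmx_mul trmxK hL mulmxA.
rewrite h1 h2 h3 -scalemxAr -scalemxAl e00Z.
ring.
Qed.
Lemma slope_prod (R : realFieldType) (phi : R -> R) s t :
  slope_restricted01 phi -> 0 <= (phi s - phi t) * ((s - t) - (phi s - phi t)).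
Proof.
move=> H; case: (eqVneq s t) => [->|hne]; first by rewrite subrr mul0r.
have /andP[h0 h1] := H s t hne.
set d := (phi s - phi t) / (s - t) in h0 h1.
have e : phi s - phi t = d * (s - t) by rewrite /d divfK // subr_eq0.
rewrite e.
have -> : d * (s - t) * (s - t - d * (s - t)) = (d * (1 - d)) * ((s - t) * (s - t)) by ring.
apply: mulr_ge0; last exact: mulr_ge0_le0 || nra.
by apply: mulr_ge0; lra.
Qed.

Lemma diag_quad (R : realFieldType) p (Lam : 'M[R]_p) (y w : 'cV[R]_p) :
  is_diag_mx Lam -> (forall i, 0 <= Lam i i) -> (forall i, 0 <= y i 0 * w i 0) ->
  0 <= (y^T *m Lam *m w) 0 0.
Proof.
move=> /is_diag_mxP Hd HL Hy; rewrite mxE; apply: sumr_ge0 => j _.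
rewrite mxE (bigD1 j) //= big1 ?addr0; last first.
  by move=> i hij; rewrite (Hd i j) ?mulr0.
rewrite mxE mulrAC; exact: mulr_ge0.
Qed.

Lemma posdef_diag (R : realFieldType) p (Lam : 'M[R]_p) :
  posdefmx Lam -> forall i, 0 <= Lam i i.
Proof.
move=> [_ H] i.
have nz : (delta_mx i 0 : 'cV[R]_p) != 0.
  apply/eqP => /matrixP/(_ i 0); rewrite !mxE !eqxx /= => /eqP; by rewrite oner_eq0.
have := H _ nz; rewrite trmx_delta -rowE -colE !mxE => h; exact: ltW.
Qed.
Definition xf (R : realFieldType) m l (du : nat -> 'cV[R]_m) (k t : nat) : R :=
  if (l - t %/ m <= k)%N then \sum_(c < m | (t %% m)%N == c) du (k - (l - t %/ m))%N c 0 else 0.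
Definition xs (R : realFieldType) m l (du : nat -> 'cV[R]_m) (k : nat) : 'cV[R]_(l * m) :=
  \col_(r < l * m) xf l du k r.

Lemma sum_ind (R : realFieldType) n (t : nat) (f : nat -> R) :
  \sum_(s < n) ((s : nat) == t)%:R * f s = if (t < n)%N then f t else 0.
Proof.
case: ltnP => h.
  rewrite (bigD1 (Ordinal h)) //= eqxx mul1r big1 ?addr0 // => s hs.
  suff -> : ((s : nat) == t) = false by rewrite mul0r.
  apply/negbTE; move: hs; apply: contra => /eqP e; apply/eqP/val_inj.
  by rewrite /= e.
apply: big1 => s _; suff -> : ((s : nat) == t) = false by rewrite mul0r.
apply/negbTE/eqP => e; move: (ltn_ord s); rewrite e; lia.
Qed.

Lemma xs0 (R : realFieldType) m l (du : nat -> 'cV[R]_m) : xs l du 0 = 0.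
Proof.
apply/matrixP => r j; rewrite !mxE /xf.
have hr := ltn_ord r.
have mpos : (0 < m)%N by move: (r : nat) hr; case: (posnP m) => // -> ?; rewrite muln0.
have : (r %/ m < l)%N by rewrite ltn_divLR.
by case: ifP => //; lia.
Qed.

Lemma xs_step (R : realFieldType) m l (du : nat -> 'cV[R]_m) k :
  xs l du k.+1 = convA R m l *m xs l du k + convB R m l *m du k.
Proof.
apply/matrixP => r j; rewrite ord1 !mxE.
have hr := ltn_ord r.
have mpos : (0 < m)%N by move: (r : nat) hr; case: (posnP m) => // -> ?; rewrite muln0.
have -> : \sum_(s < l * m) convA R m l r s * xs l du k s 0 =
          \sum_(s < l * m) ((s : nat) == (r + m)%N)%:R * xf l du k s.
  by apply: eq_bigr => s _; rewrite !mxE.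
rewrite sum_ind.
have -> : \sum_(s < m) convB R m l r s * du k s 0 =
          \sum_(s < m) ((r : nat) == (l.-1 * m + s)%N)%:R * du k s 0.
  by apply: eq_bigr => s _; rewrite !mxE.
rewrite /xf.
have hrd := divn_eq r m.
have hc : (r %% m < m)%N by rewrite ltn_pmod.
have hi : (r %/ m < l)%N by rewrite ltn_divLR.
move: hrd hc hi.
set i := (r %/ m)%N; set c := (r %% m)%N => hrd hc hi.
case: (ltnP i.+1 l) => hil.
  have hB : \sum_(s < m) ((r : nat) == (l.-1 * m + s)%N)%:R * du k s 0 = 0.
    apply: big1 => s _; suff -> : ((r : nat) == (l.-1 * m + s)%N) = false by rewrite mul0r.
    apply/negP => /eqP e2; move: (ltn_ord s); nia.
  rewrite hB addr0.
  have -> : (r + m < l * m)%N by rewrite hrd; nia.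
  have e : (r + m = i.+1 * m + c)%N by rewrite hrd mulSn; lia.
  rewrite e divnMDl // modnMDl divn_small // modn_small // addn0.
  have -> : (l - i <= k.+1)%N = (l - i.+1 <= k)%N by apply/idP/idP; lia.
  by have -> : (k.+1 - (l - i) = k - (l - i.+1))%N by lia.
have hil' : i = l.-1 by lia.
have -> : (r + m < l * m)%N = false by apply/negbTE; rewrite -leqNgt hrd; nia.
rewrite add0r.
have -> : (l - i <= k.+1)%N by lia.
have -> : (k.+1 - (l - i) = k)%N by lia.
rewrite (big_mkcond (fun s : 'I_m => c == s)) /=.
apply: eq_bigr => s _.
have -> : ((r : nat) == (l.-1 * m + s)%N) = (c == s).
  by apply/eqP/eqP; rewrite hrd hil'; lia.
by case: (c == s); rewrite ?mul1r ?mul0r.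
Qed.
Lemma sum_divmod (R : realFieldType) l m (F : 'I_(l * m) -> R) (G : nat -> nat -> R) :
  (forall s : 'I_(l * m), F s = G (s %/ m)%N (s %% m)%N) ->
  \sum_(s < l * m) F s = \sum_(i < l) \sum_(c < m) G i c.
Proof.
move=> hF; rewrite (eq_bigr _ (fun s _ => hF s)).
rewrite -(big_mkord (fun _ => true) (fun s => G (s %/ m)%N (s %% m)%N)).
transitivity (\sum_(0 <= i < l) \sum_(0 <= c < m) G i c); last first.
  by rewrite big_mkord; apply: eq_bigr => i _; rewrite big_mkord.
case: (posnP m) => [->|mpos].
  by rewrite muln0 big_geq // big1 // => i _; rewrite big_geq.
clear F hF; elim: l => [|l IH]; first by rewrite mul0n !big_geq.
rewrite big_nat_recr //= -IH mulSn addnC (big_cat_nat (n := (l * m)%N)) //= ?leq_addr.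
congr (_ + _).
rewrite -{1}(add0n (l * m)%N) big_addn addKn.
apply: eq_big_nat => i /andP[_ him].
by rewrite addnC divnMDl // divn_small // addn0 modnMDl modn_small.
by [].
Qed.

Lemma sum_pick1 (R : realFieldType) m (c : 'I_m) (f : 'I_m -> R) :
  \sum_(c' < m | (c : nat) == c') f c' = f c.
Proof. by rewrite (eq_bigl (fun c' => c' == c)) ?big_pred1_eq // => c'; rewrite eq_sym. Qed.

Lemma out_eq (R : realFieldType) m p l (K : 'I_l.+1 -> 'M[R]_(p, m)) (du : nat -> 'cV[R]_m) k :
  \sum_(j < l.+1) (if (j <= k)%N then K j *m du (k - j)%N else 0) =
  convC K *m xs l du k + convD K *m du k.
Proof.
apply/matrixP => r j; rewrite ord1 summxE big_ord_recl /= subn0 [in RHS]mxE addrC.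
congr (_ + _).
rewrite mxE (@sum_divmod R l m _ (fun i c =>
   (\sum_(c' < m | c == c') K (inord (l - i)) r c') *
   (if (l - i <= k)%N then \sum_(c' < m | c == c') du (k - (l - i))%N c' 0 else 0))); last first.
  by move=> s; rewrite !mxE.
rewrite (reindex_inj rev_ord_inj) /=.
apply: eq_bigr => i _.
have eb : bump 0 (l - i.+1) = (l - i)%N by rewrite /bump /=; move: (ltn_ord i); lia.
rewrite eb.
have -> : lift ord0 (rev_ord i) = (inord (l - i) : 'I_l.+1).
  apply: val_inj => /=; rewrite /bump /= inordK; move: (ltn_ord i); lia.
case: ifP => hk; rewrite ?mxE.
  by apply: eq_bigr => c _; rewrite !sum_pick1.
by symmetry; apply: big1 => c _; rewrite mulr0.
Qed.

Theorem lemma4 (R : realFieldType) (m p l : nat) (phi : R -> R)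
    (K : 'I_l.+1 -> 'M[R]_(p, m)) (b : 'cV[R]_p)
    (Q : 'M[R]_p) (S : 'M[R]_(p, m)) (Rm : 'M[R]_m)
    (E : 'M[R]_(l * m)) :
  slope_restricted01 phi ->
  Q^T = Q -> Rm^T = Rm ->
  E \in unitmx ->
  (exists (P : 'M[R]_(l * m)) (Lam : 'M[R]_p),
      posdefmx P /\ is_diag_mx Lam /\ posdefmx Lam /\
      psdmx (lmi_mx (E *m convA R m l *m invmx E) (E *m convB R m l)
                    (convC K *m invmx E) (convD K) P Lam Q S Rm)) ->
  incr_dissipative (conv_layer phi K b) Q S Rm.
Proof.
move=> Hphi HQ HR HE [P [Lam [HP [Hdiag [HL Hpsd]]]]] N _ wa wb.
pose du k := wa k - wb k.
pose va k := b + \sum_(j < l.+1) (if (j <= k)%N then K j *m wa (k - j)%N else 0).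
pose vb k := b + \sum_(j < l.+1) (if (j <= k)%N then K j *m wb (k - j)%N else 0).
pose dy k := conv_layer phi K b wa k - conv_layer phi K b wb k.
pose z k := E *m xs l du k.
pose V k := ((z k)^T *m P *m z k) 0 0.
have hdv : forall k, va k - vb k = convC K *m xs l du k + convD K *m du k.
  move=> k; rewrite -out_eq /va /vb opprD addrACA subrr add0r -sumrB.
  apply: eq_bigr => j _; case: ifP => _; last by rewrite subr0.
  by rewrite -mulmxBr.
have hz : forall k, E *m convA R m l *m invmx E *m z k + E *m convB R m l *m du k = z k.+1.
  move=> k; rewrite /z xs_step mulmxDr -!mulmxA (mulKmx HE).
  by rewrite !mulmxA.
have hv : forall k, convC K *m invmx E *m z k + convD K *m du k = va k - vb k.
  by move=> k; rewrite hdv /z -mulmxA (mulKmx HE).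
have hLam : forall k, 0 <= ((dy k)^T *m Lam *m (va k - vb k - dy k)) 0 0.
  move=> k; apply: diag_quad => //; first exact: posdef_diag.
  move=> i; rewrite /dy /conv_layer !mxE.
  exact: slope_prod.
have step : forall k, V k.+1 - V k <=
   ((dy k)^T *m Q *m dy k) 0 0 + 2%:R * ((dy k)^T *m S *m du k) 0 0
         + ((du k)^T *m Rm *m du k) 0 0.
  move=> k.
  have H := Hpsd.2 (col_mx (col_mx (z k) (du k)) (dy k)).
  rewrite quad_expand in H; last by case: HL.
  rewrite hz hv in H.
  have := hLam k; rewrite /V; lra.
have V0 : V 0%N = 0 by rewrite /V /z xs0 mulmx0 trmx0 !mul0mx mxE.
have VN : 0 <= V N.
  rewrite /V; case: (eqVneq (z N) 0) => [->|nz].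
    by rewrite trmx0 !mul0mx mxE.
  by apply: ltW; apply: HP.2.
apply: le_trans (_ : 0 <= V N - V 0%N) _; first by rewrite V0 subr0.
rewrite -(telescope_sumr (fun k => V k) (leq0n N)) big_mkord.
by apply: ler_sum => k _; apply: step.
Qed.
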